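(* Let $C$ be a commutative ring with identity and $\lambda\in C$. Let $\text{Ш}_C(C)$ denote the shuffle Baxter $C$-algebra of weight $\lambda$ on $C$ (equivalently the free Baxter $C$-algebra of weight $\lambda$ on the empty set), and $\widehat{\text{Ш}}_C(C)$ its completion. \begin{enumerate} \item If $C$ is a noetherian $\mathbb{Q}$-algebra, then $\text{Ш}_C(C)$ is a noetherian ring for every $\lambda\in C$. \item If $C$ is a noetherian $\mathbb{Q}$-algebra and if $\lambda =0$, then $\widehat{\text{Ш}}_C(C)$ is a noetherian ring. \item If $C$ is a $\mathbb{Q}$-algebra, $\lambda\in C$ is not a zero divisor and $\cap_{n\in\mathbb{N}}\lambda^n C \neq 0$, then $\widehat{\text{Ш}}_C(C)$ is not a noetherian ring. \item If $C$ is not a $\mathbb{Q}$-algebra, then $\text{Ш}_C(C)$ and $\widehat{\text{Ш}}_C(C)$ are not noetherian rings. \end{enumerate}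
   Context: All rings are commutative with identity. A Baxter $C$-algebra of weight $\lambda$ is a commutative $C$-algebra $R$ with a $C$-linear operator $P$ satisfying $P(x)P(y)=P(xP(y))+P(yP(x))+\lambda P(xy)$. Here $\text{Ш}_C(C)=\bigoplus_{n\in\mathbb{N}} C\,\mathbf{1}^{\otimes (n+1)}$ and its completion $\widehat{\text{Ш}}_C(C)=\prod_{n\in\mathbb{N}} C\,\mathbf{1}^{\otimes (n+1)}$ (completion with respect to the filtration $\mathrm{Fil}^k=\bigoplus_{n\geq k} C\mathbf{1}^{\otimes(n+1)}$), with multiplication determined by $\mathbf{1}^{\otimes (m+1)} \mathbf{1}^{\otimes (n+1)} = \sum_{k=0}^m \binom{m+n-k}{n}\binom{n}{k} \lambda^k \mathbf{1}^{\otimes (m+n+1-k)}$ for $m,n\in\mathbb{N}$, and Baxter operator $P(\mathbf{1}^{\otimes(n+1)})=\mathbf{1}^{\otimes(n+2)}$. *)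

(* Defs.v *)
From mathcomp Require Import all_boot all_order all_algebra.
Set Implicit Arguments. Unset Strict Implicit. Unset Printing Implicit Defensive.
Import GRing.Theory.
Local Open Scope ring_scope.

Definition is_ideal_in (T : Type) (S : T -> Prop) (z : T) (add : T -> T -> T)
  (opp : T -> T) (mul : T -> T -> T) (I : T -> Prop) : Prop :=
  [/\ (forall x, I x -> S x), I z,
      (forall x y, I x -> I y -> I (add x y)),
      (forall x, I x -> I (opp x)) &
      (forall r x, S r -> I x -> I (mul r x))].

Definition noetherian_on (T : Type) (S : T -> Prop) (z : T) (add : T -> T -> T)
  (opp : T -> T) (mul : T -> T -> T) : Prop :=
  forall I : nat -> (T -> Prop),
    (forall n, is_ideal_in S z add opp mul (I n)) ->
    (forall n x, I n x -> I n.+1 x) ->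
    exists N : nat, forall n, (N <= n)%N -> forall x, I n x -> I N x.

Definition noetherian_ring (C : comPzRingType) : Prop :=
  noetherian_on (fun _ : C => True) 0 +%R -%R *%R.

Definition is_Q_algebra (C : comPzRingType) : Prop :=
  forall n : nat, exists y : C, (n.+1)%:R * y = 1.

(* Elements of the completion \hat{Ш}_C(C): a : nat -> C stands for
   sum_n a n 1^{\otimes (n+1)}. Ш_C(C) is the subset of finitely supported ones. *)
Section Sha.
Variable C : comPzRingType.
Implicit Types (lam : C) (a b : nat -> C).

Definition sh_zero : nat -> C := fun _ => 0.
Definition sh_add a b : nat -> C := fun n => a n + b n.
Definition sh_opp a : nat -> C := fun n => - a n.
(* 1^{(m+1)} 1^{(n+1)} = sum_{k<=m} C(m+n-k,n) C(n,k) lam^k 1^{(m+n+1-k)},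
   extended bilinearly (and continuously for the completion): coefficient at p
   collects all (m,n,k) with k <= m and m+n-k = p (necessarily m,n <= p). *)
Definition sh_mul lam a b : nat -> C := fun p =>
  \sum_(m < p.+1) \sum_(n < p.+1) \sum_(k < m.+1)
     (if (m + n - k == p)%N
      then a m * b n * ('C(m + n - k, n))%:R * ('C(n, k))%:R * lam ^+ k
      else 0).

Definition sha_carrier (a : nat -> C) : Prop :=
  exists N : nat, forall n, (N <= n)%N -> a n = 0.

Definition sha_noetherian lam : Prop :=
  noetherian_on sha_carrier sh_zero sh_add sh_opp (sh_mul lam).

Definition sha_hat_noetherian lam : Prop :=
  noetherian_on (fun _ => True) sh_zero sh_add sh_opp (sh_mul lam).
End Sha.

(* Main.v *)
Require Import Defs.
From mathcomp Require Import all_boot all_order all_algebra.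
From mathcomp Require Import zify ring.
From Stdlib Require Import FunctionalExtensionality ClassicalEpsilon Classical.
Set Implicit Arguments. Unset Strict Implicit. Unset Printing Implicit Defensive.
Import GRing.Theory.
Local Open Scope ring_scope.



Section Common.
Variable C : comPzRingType.

Definition delta (j : nat) (c : C) : nat -> C := fun n => if n == j then c else 0.

Lemma sum_single (n : nat) (F : nat -> C) d : (d < n)%N ->
  (forall i, (i < n)%N -> i != d -> F i = 0) -> \sum_(i < n) F i = F d.
Proof.
move=> Hd H; rewrite (bigD1 (Ordinal Hd)) //= big1 ?addr0 // => i Hi.
apply: H => //; apply: contra Hi => /eqP Hi; apply/eqP/val_inj.
Qed.

Lemma sum_extend (n1 n2 : nat) (F : nat -> C) : (n1 <= n2)%N ->
  (forall i, (n1 <= i < n2)%N -> F i = 0) -> \sum_(i < n2) F i = \sum_(i < n1) F i.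
Proof.
move=> Hle H; rewrite (big_ord_widen n2 F Hle) [RHS]big_mkcond /=.
apply: eq_bigr => i _; case: ifP => // Hi; apply: H; rewrite ltn_ord andbT.
by rewrite leqNgt Hi /=.
Qed.

Lemma sh_mul_top (lam : C) (a b : nat -> C) d e : (forall j, (d < j)%N -> a j = 0) ->
  (forall j, (e < j)%N -> b j = 0) ->
  (forall P, (d + e < P)%N -> sh_mul lam a b P = 0) /\
  sh_mul lam a b (d + e) = ('C(d + e, e))%:R * (a d * b e).
Proof.
move=> Ha Hb; split.
  move=> P HP; rewrite /sh_mul; apply: big1 => m _; apply: big1 => n _.
  apply: big1 => k _; case: eqP => // Heq.
  case: (leqP m d) => Hm; last by rewrite Ha // !mul0r.
  case: (leqP n e) => Hn; last by rewrite Hb // mulr0 !mul0r.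
  exfalso; lia.
rewrite /sh_mul.
have Hd : (d < (d + e).+1)%N by lia.
rewrite (sum_single (F := fun m => \sum_(n < (d + e).+1) \sum_(k < m.+1)
     (if (m + n - k == d + e)%N
      then a m * b n * ('C(m + n - k, n))%:R * ('C(n, k))%:R * lam ^+ k
      else 0)) Hd); last first.
  move=> m _ Hm; apply: big1 => n _; apply: big1 => k _; case: eqP => // Heq.
  case: (leqP m d) => Hm'; last by rewrite Ha // !mul0r.
  case: (leqP n e) => Hn; last by rewrite Hb // mulr0 !mul0r.
  exfalso; move/eqP: Hm; lia.
have He : (e < (d + e).+1)%N by lia.
rewrite (sum_single (F := fun n => \sum_(k < d.+1)
     (if (d + n - k == d + e)%N
      then a d * b n * ('C(d + n - k, n))%:R * ('C(n, k))%:R * lam ^+ k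
      else 0)) He); last first.
  move=> n _ Hn; apply: big1 => k _; case: eqP => // Heq.
  case: (leqP n e) => Hn'; last by rewrite Hb // mulr0 !mul0r.
  exfalso; move/eqP: Hn; lia.
have H0 : (0 < d.+1)%N by [].
rewrite (sum_single (F := fun k => 
     (if (d + e - k == d + e)%N
      then a d * b e * ('C(d + e - k, e))%:R * ('C(e, k))%:R * lam ^+ k
      else 0)) H0); last first.
  move=> k Hk Hk0; case: eqP => // Heq; exfalso; move/eqP: Hk0; lia.
by rewrite subn0 eqxx bin0 expr0 !mulr1 mulrC.
Qed.

End Common.



Section Part4.
Variable C : comPzRingType.

Lemma bin_div p K P n : prime p -> (p ^ K %| P)%N -> ~~ (p ^ K %| n)%N ->
  (p %| 'C(P, n))%N.
Proof.
move=> pp HP Hn; case: (leqP n P) => HnP; last by rewrite bin_small.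
case: n Hn HnP => [|n] Hn HnP; first by rewrite dvdn0 in Hn.
have E := mul_bin_diag P n.
apply: contraR Hn => Hnd.
have Hc : coprime (p ^ K) 'C(P, n.+1) by rewrite coprimeXl // prime_coprime.
rewrite -(Gauss_dvdl _ Hc) -E; exact: dvdn_mulr.
Qed.

Lemma nonQ_prime : ~ is_Q_algebra C -> exists p, prime p /\ forall y : C, p%:R * y <> 1.
Proof.
move=> HQ; apply: NNPP => Hn; apply: HQ.
have Hp : forall p, prime p -> exists y : C, p%:R * y = 1.
  move=> p pp; apply: NNPP => Hy; apply: Hn; exists p; split => // y Hy'.
  by apply: Hy; exists y.
suff H : forall n, (0 < n)%N -> exists y : C, n%:R * y = 1 by move=> n; apply: H.
elim/ltn_ind => n IH Hn0.
case: (ltnP 1 n) => Hn1; last first.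
  have E : n = 1%N by lia.
  by exists 1; rewrite E mulr1.
have pp := pdiv_prime Hn1; have [y Hy] := Hp _ pp.
have Hdv := pdiv_dvd n.
have Hq : (n %/ pdiv n < n)%N by apply: ltn_Pdiv => //; exact: prime_gt1.
have Hq0 : (0 < n %/ pdiv n)%N by rewrite divn_gt0 ?prime_gt0 // dvdn_leq.
have [z Hz] := IH _ Hq Hq0.
exists (y * z); rewrite -{1}(divnK Hdv) natrM.
by rewrite [y * z]mulrC mulrACA Hz Hy mulr1.
Qed.

Lemma part4_gen (lam : C) (S : (nat -> C) -> Prop) p :
  prime p -> (forall y : C, p%:R * y <> 1) ->
  (forall a b, S a -> S b -> S (sh_add a b)) -> S (@sh_zero C) ->
  (forall a, S a -> S (sh_opp a)) ->
  (forall a b, S a -> S b -> S (sh_mul lam a b)) -> (forall j, S (delta j 1)) ->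
  ~ noetherian_on S (@sh_zero C) (@sh_add C) (@sh_opp C) (sh_mul lam).
Proof.
move=> pp Hnu Sadd S0 Sopp Smul Sdel Hn.
pose pC (c : C) := exists z, c = p%:R * z.
pose I K (a : nat -> C) := S a /\ forall n, (p ^ K %| n)%N -> pC (a n).
have pC0 : pC 0 by exists 0; rewrite mulr0.
have pCD : forall x y, pC x -> pC y -> pC (x + y).
  by move=> x y [u ->] [v ->]; exists (u + v); rewrite mulrDr.
have pCN : forall x, pC x -> pC (- x).
  by move=> x [u ->]; exists (- u); rewrite mulrN.
have pCM : forall x y, pC y -> pC (x * y).
  by move=> x y [u ->]; exists (x * u); rewrite mulrCA.
have pCMr : forall x y, pC x -> pC (x * y).
  by move=> x y Hx; rewrite mulrC; apply: pCM.
have Hid : forall K, is_ideal_in S (@sh_zero C) (@sh_add C) (@sh_opp C) (sh_mul lam) (I K).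
  move=> K; split.
  - by move=> x [].
  - by split=> // n _; exact: pC0.
  - move=> x y [Sx Hx] [Sy Hy]; split; first exact: Sadd.
    move=> n Hn'; exact: pCD (Hx n Hn') (Hy n Hn').
  - move=> x [Sx Hx]; split; first exact: Sopp.
    move=> n Hn'; exact: pCN (Hx n Hn').
  - move=> r x Sr [Sx Hx]; split; first exact: Smul.
    move=> P HP; rewrite /sh_mul.
    apply: big_ind; [exact: pC0 | exact: pCD | move=> m _].
    apply: big_ind; [exact: pC0 | exact: pCD | move=> n _].
    apply: big_ind; [exact: pC0 | exact: pCD | move=> k _].
    case: eqP => [Heq|_]; last exact: pC0.
    case: (boolP (p ^ K %| n)%N) => Hpn.
      by apply pCMr; apply pCMr; apply pCMr; apply pCM; apply: Hx.
    have HP' : (p ^ K %| m + n - k)%N by rewrite Heq.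
    have /dvdnP [q Hq] := bin_div pp HP' Hpn.
    apply pCMr; apply pCMr; apply pCM; rewrite Hq natrM; apply pCM; exists 1; by rewrite mulr1.
have Hinc : forall K a, I K a -> I K.+1 a.
  move=> K a [Sa Ha]; split => // n Hn'; apply: Ha.
  exact: dvdn_trans (dvdn_exp2l p (leqnSn K)) Hn'.
have [N HN] := Hn I Hid Hinc.
have HI : I N.+1 (delta (p ^ N) 1).
  split; first exact: Sdel.
  move=> n Hn'; rewrite /delta; case: eqP => [Heq|_]; last exact: pC0.
  exfalso; subst n; have Hp0 : (0 < p ^ N)%N by rewrite expn_gt0 prime_gt0.
  have := dvdn_leq Hp0 Hn'.
  by rewrite leqNgt ltn_exp2l ?(prime_gt1 pp) ?ltnSn.
have [_ H] := HN N.+1 (leqnSn N) _ HI.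
have [z Hz] := H (p ^ N)%N (dvdnn _).
rewrite /delta eqxx in Hz; apply: (Hnu z); by rewrite -Hz.
Qed.

Lemma carrier_mul (lam : C) a b : sha_carrier a -> sha_carrier b ->
  sha_carrier (sh_mul lam a b).
Proof.
move=> [N HN] [M HM]; exists (N + M).+1 => P HP.
have Ha : forall j, (N < j)%N -> a j = 0 by move=> j Hj; apply: HN; lia.
have Hb : forall j, (M < j)%N -> b j = 0 by move=> j Hj; apply: HM; lia.
have [H _] := sh_mul_top lam Ha Hb; apply: H; lia.
Qed.

Lemma part4 : ~ is_Q_algebra C -> forall lam : C,
  ~ sha_noetherian lam /\ ~ sha_hat_noetherian lam.
Proof.
move=> HQ lam; have [p [pp Hp]] := nonQ_prime HQ; split.
  apply: (part4_gen pp Hp).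
  - move=> a b [N HN] [M HM]; exists (maxn N M) => n Hn.
    rewrite /sh_add HN ?HM ?addr0 //; lia.
  - by exists 0%N.
  - move=> a [N HN]; exists N => n Hn; by rewrite /sh_opp HN ?oppr0.
  - exact: carrier_mul.
  - move=> j; exists j.+1 => n Hn; rewrite /delta; case: eqP => // E; lia.
by apply: (part4_gen pp Hp).
Qed.

End Part4.



Lemma binom_swap t u n : (n <= u)%N ->
  ('C(t, u) * 'C(u, n) = 'C(t, n) * 'C(t - n, u - n))%N.
Proof.
move=> Hnu; case: (leqP u t) => Hut; last first.
  rewrite bin_small // mul0n; case: (leqP n t) => Hnt; last by rewrite (bin_small Hnt).
  rewrite (@bin_small (t - n) (u - n)) ?muln0 //; lia.
have Hnt : (n <= t)%N by lia.
have H1 := bin_fact Hut; have H2 := bin_fact Hnu; have H3 := bin_fact Hnt.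
have H4 : (u - n <= t - n)%N by lia.
have H5 := bin_fact H4.
have E : (t - n - (u - n) = t - u)%N by lia.
rewrite E in H5.
have Hpos : (0 < n`! * (u - n)`! * (t - u)`!)%N by rewrite !muln_gt0 !fact_gt0.
apply/eqP; rewrite -(eqn_pmul2r Hpos); apply/eqP.
transitivity ('C(t, u) * ('C(u, n) * (n`! * (u - n)`!)) * (t - u)`!)%N; first ring.
rewrite H2 -mulnA H1.
transitivity ('C(t, n) * (n`! * ('C(t - n, u - n) * ((u - n)`! * (t - u)`!))))%N; last ring.
by rewrite H5 H3.
Qed.

Lemma nat_ident t m n : (\sum_(k < m.+1) 'C(t, m + n - k) * 'C(m + n - k, n) * 'C(n, k)
   = 'C(t, m) * 'C(t, n))%N.
Proof.
transitivity ('C(t, n) * \sum_(k < m.+1) 'C(n, k) * 'C(t - n, m - k))%N.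
  rewrite big_distrr; apply: eq_bigr => k _ /=.
  have Hk := ltn_ord k.
  rewrite binom_swap; last lia.
  have -> : (m + n - k - n = m - k)%N by lia.
  ring.
rewrite binomial.Vandermonde; case: (leqP n t) => Hnt.
  by rewrite subnKC // mulnC.
by rewrite (bin_small Hnt) muln0 mul0n.
Qed.

Section Part3.
Variable C : comPzRingType.

Definition chi (lam : C) t (a : nat -> C) := \sum_(n < t.+1) lam ^+ n * 'C(t, n)%:R * a n.

Definition kappa (lam : C) m n P : C := \sum_(k < m.+1)
  if (m + n - k == P)%N then 'C(m + n - k, n)%:R * 'C(n, k)%:R * lam ^+ k else 0.

Lemma kappa0 lam m n P : (P < m)%N \/ (P < n)%N -> kappa lam m n P = 0.
Proof.
move=> H; apply: big1 => k _; case: eqP => // E.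
have Hk := ltn_ord k.
case: H => H; last (exfalso; lia).
by rewrite (@bin_small n k) ?mulr0 ?mul0r //; lia.
Qed.

Lemma sh_mul_ext (lam : C) a b P T : (P <= T)%N ->
  sh_mul lam a b P = \sum_(m < T.+1) \sum_(n < T.+1) a m * b n * kappa lam m n P.
Proof.
move=> HPT.
rewrite (@sum_extend C P.+1 T.+1 (fun m => \sum_(n < T.+1) a m * b n * kappa lam m n P)); last 2 first.
- lia.
- move=> m Hm; apply: big1 => n _; rewrite kappa0 ?mulr0 //; left; lia.
apply: eq_bigr => m _ /=.
rewrite (@sum_extend C P.+1 T.+1 (fun n => a m * b n * kappa lam m n P)); last 2 first.
- lia.
- move=> n Hn; rewrite kappa0 ?mulr0 //; right; lia.
apply: eq_bigr => n _ /=; rewrite /kappa mulr_sumr; apply: eq_bigr => k _.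
by case: eqP => _; rewrite ?mulr0 // !mulrA.
Qed.

Lemma kappa_sum (lam : C) t m n :
  \sum_(P < t.+1) lam ^+ P * 'C(t, P)%:R * kappa lam m n P
  = lam ^+ (m + n) * ('C(t, m) * 'C(t, n))%:R.
Proof.
transitivity (\sum_(P < t.+1) \sum_(k < m.+1) (if (m + n - k == P)%N then
   lam ^+ (m + n) * ('C(t, m + n - k) * 'C(m + n - k, n) * 'C(n, k))%:R else 0)).
  apply: eq_bigr => P _; rewrite /kappa mulr_sumr; apply: eq_bigr => k _.
  case: eqP => [E|_]; last by rewrite mulr0.
  have Hk := ltn_ord k.
  have Ex : lam ^+ (m + n) = lam ^+ (m + n - k) * lam ^+ k.
    by rewrite -exprD subnK //; lia.
  rewrite -E !natrM Ex; ring.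
rewrite exchange_big /= -nat_ident natr_sum mulr_sumr; apply: eq_bigr => k _.
case: (leqP (m + n - k) t) => Hu.
  have Hu' : (m + n - k < t.+1)%N by lia.
  rewrite (@sum_single C t.+1 (fun P => if (m + n - k == P)%N then
   lam ^+ (m + n) * ('C(t, m + n - k) * 'C(m + n - k, n) * 'C(n, k))%:R else 0) _ Hu').
    by rewrite eqxx.
  by move=> i _ Hi; rewrite eq_sym (negbTE Hi).
rewrite big1; last by move=> P _; case: eqP => // E; have := ltn_ord P; lia.
by rewrite bin_small // !mul0n mulr0.
Qed.

Lemma chi_mul lam t a b : chi lam t (sh_mul lam a b) = chi lam t a * chi lam t b.
Proof.
rewrite /chi.
transitivity (\sum_(P < t.+1) \sum_(m < t.+1) \sum_(n < t.+1)
    lam ^+ P * 'C(t, P)%:R * (a m * b n * kappa lam m n P)).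
  apply: eq_bigr => P _; rewrite (@sh_mul_ext lam a b P t); last first.
    by have := ltn_ord P.
  rewrite mulr_sumr; apply: eq_bigr => m _; by rewrite mulr_sumr.
rewrite exchange_big /= big_distrl; apply: eq_bigr => m _ /=.
rewrite exchange_big /= big_distrr; apply: eq_bigr => n _ /=.
transitivity (a m * b n * \sum_(P < t.+1) lam ^+ P * 'C(t, P)%:R * kappa lam m n P).
  rewrite mulr_sumr; apply: eq_bigr => P _; ring.
rewrite kappa_sum natrM exprD; ring.
Qed.

Lemma chi_add lam t a b : chi lam t (sh_add a b) = chi lam t a + chi lam t b.
Proof. by rewrite /chi -big_split; apply: eq_bigr => n _; rewrite /sh_add mulrDr. Qed.

Lemma chi_opp lam t a : chi lam t (sh_opp a) = - chi lam t a.
Proof. by rewrite /chi -sumrN; apply: eq_bigr => n _; rewrite /sh_opp mulrN. Qed.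

Lemma chi_zero lam t : chi lam t (@sh_zero C) = 0.
Proof. by rewrite /chi big1 // => n _; rewrite /sh_zero mulr0. Qed.

Lemma alt_sum s : (0 < s)%N -> \sum_(j < s.+1) (-1) ^+ j * ('C(s, j))%:R = 0 :> C.
Proof.
move=> Hs; have := exprBn (1 : C) 1 s; rewrite subrr expr0n.
have -> : (s == 0%N) = false by lia.
move=> E; rewrite [RHS]E; apply: eq_bigr => j _; by rewrite !expr1n !mulr1 mulr_natr.
Qed.

Definition eK (yf : nat -> C) K : nat -> C :=
  fun n => if (K <= n)%N then (-1) ^+ (n - K) * 'C(n, K)%:R * yf n else 0.

Lemma chi_eK lam (x : C) yf K t : (forall n, x = lam ^+ n * yf n) ->
  chi lam t (eK yf K) = x * \sum_(n < t.+1)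
      (if (K <= n)%N then (-1) ^+ (n - K) * ('C(t - K, n - K))%:R else 0) * 'C(t, K)%:R.
Proof.
move=> Hx; rewrite /chi mulr_sumr; apply: eq_bigr => n _; rewrite /eK.
case: ifP => HK; last by rewrite !(mulr0, mul0r).
rewrite [x](Hx n).
have E : ('C(t, n) * 'C(n, K) = 'C(t, K) * 'C(t - K, n - K))%N by rewrite binom_swap.
transitivity (lam ^+ n * yf n * ((-1) ^+ (n - K) * ('C(t, n) * 'C(n, K))%:R)).
  rewrite natrM; ring.
rewrite E natrM; ring.
Qed.

Lemma chi_eK_same lam (x : C) yf K : (forall n, x = lam ^+ n * yf n) ->
  chi lam K (eK yf K) = x.
Proof.
move=> Hx; rewrite (chi_eK _ _ Hx).
rewrite (@sum_single C K.+1 (fun n => (if (K <= n)%N then (-1) ^+ (n - K) * ('C(K - K, n - K))%:R else 0) * 'C(K, K)%:R) K) //.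
  rewrite leqnn subnn expr0 bin0 binn !mulr1 //.
move=> i Hi Hne; have -> : (K <= i)%N = false by move/eqP: Hne; lia.
by rewrite mul0r.
Qed.

Lemma chi_eK_gt lam (x : C) yf K t : (forall n, x = lam ^+ n * yf n) ->
  (K < t)%N -> chi lam t (eK yf K) = 0.
Proof.
move=> Hx Ht; rewrite (chi_eK _ _ Hx) -mulr_suml.
suff -> : \sum_(n < t.+1) (if (K <= n)%N then (-1) ^+ (n - K) * ('C(t - K, n - K))%:R else 0) = 0 :> C.
  by rewrite mul0r mulr0.
rewrite -(big_mkord xpredT (fun n => if (K <= n)%N then (-1) ^+ (n - K) * ('C(t - K, n - K))%:R else 0 : C)).
rewrite (@big_cat_nat _ _ _ K) //=; last lia.
rewrite big_nat_cond big1 ?add0r; last first.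
  move=> i /andP [/andP [_ Hi] _]; have -> : (K <= i)%N = false by lia. by [].
rewrite -{1}(add0n K) big_addn.
have -> : (t.+1 - K = (t - K).+1)%N by lia.
rewrite big_mkord -[RHS](@alt_sum (t - K)); last lia.
apply: eq_bigr => j _; rewrite leq_addl addnK //.
Qed.

Lemma part3 (lam : C) : (exists2 x : C, x != 0 & forall n : nat, exists y : C, x = lam ^+ n * y) ->
  ~ sha_hat_noetherian lam.
Proof.
move=> [x Hx0 Hx] Hn.
pose yf n := epsilon (inhabits (0 : C)) (fun y => x = lam ^+ n * y).
have Hyf : forall n, x = lam ^+ n * yf n.
  by move=> n; apply: (epsilon_spec (inhabits (0 : C)) (fun y => x = lam ^+ n * y)); apply: Hx.
pose I K (a : nat -> C) := forall t, (K <= t)%N -> chi lam t a = 0.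
have Hid : forall K, is_ideal_in (fun _ => True) (@sh_zero C) (@sh_add C) (@sh_opp C) (sh_mul lam) (I K).
  move=> K; split => //.
  - by move=> t _; rewrite chi_zero.
  - by move=> a b Ha Hb t Ht; rewrite chi_add Ha ?Hb ?addr0.
  - by move=> a Ha t Ht; rewrite chi_opp Ha ?oppr0.
  - by move=> r a _ Ha t Ht; rewrite chi_mul Ha ?mulr0.
have Hinc : forall K a, I K a -> I K.+1 a by move=> K a Ha t Ht; apply: Ha; lia.
have [N HN] := Hn I Hid Hinc.
have HI : I N.+1 (eK yf N) by move=> t Ht; apply: chi_eK_gt.
have := HN N.+1 (leqnSn N) _ HI N (leqnn N).
rewrite (@chi_eK_same lam x) // => E; by rewrite E eqxx in Hx0.
Qed.

End Part3.



Section Chain.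
Variable C : comPzRingType.

Definition idealC (J : C -> Prop) := is_ideal_in (fun _ : C => True) 0 +%R -%R *%R J.

Lemma chain2 (L : nat -> nat -> C -> Prop) : noetherian_ring C ->
  (forall d n, idealC (L d n)) -> (forall d n c, L d n c -> L d.+1 n c) ->
  (forall d n c, L d n c -> L d n.+1 c) ->
  exists N D, (D <= N)%N /\ (forall n, (N <= n)%N -> forall d c, L d n c -> L d N c) /\
    (forall n d, (N <= n)%N -> (D <= d)%N -> forall c, L d n c -> L D N c).
Proof.
move=> HC Hid Hd Hn.
have Hmono : forall d d' n n' c, (d <= d')%N -> (n <= n')%N -> L d n c -> L d' n' c.
  move=> d d' n n' c Hdd Hnn H.
  have H1 : forall k, L d (n + k)%N c.
    by elim=> [|k IH]; [rewrite addn0 | rewrite addnS; apply: Hn].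
  have H2 : forall k, L (d + k)%N n' c.
    elim => [|k IH]; last by rewrite addnS; apply: Hd.
    by rewrite addn0 -(subnKC Hnn); apply: H1.
  by rewrite -(subnKC Hdd).
have [N0 HN0] := HC (fun n => L n n) (fun n => Hid n n)
  (fun n c H => Hmono n n.+1 n n.+1 c (leqnSn n) (leqnSn n) H).
have Hfin : forall D, exists M, forall d, (d < D)%N -> forall n, (M <= n)%N ->
    forall c, L d n c -> L d M c.
  elim => [|D [M HM]]; first by exists 0%N.
  have [ND HND] := HC (fun n => L D n) (fun n => Hid D n) (fun n c H => Hn D n c H).
  exists (maxn M ND) => d Hd' n Hnm c H.
  case: (ltnP d D) => HdD.
    apply: (Hmono d d M (maxn M ND) c (leqnn d) (leq_maxl M ND)).
    apply: (HM d HdD n _ c H); lia.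
  have E : d = D by lia.
  subst d; apply: (Hmono D D ND (maxn M ND) c (leqnn D) (leq_maxr M ND)).
  apply: (HND n _ c H); lia.
have [M HM] := Hfin N0.
have HN0' : forall n d c, (N0 <= d)%N -> L d n c -> L N0 N0 c.
  move=> n d c Hd' H.
  have H1 : L (maxn d n) (maxn d n) c.
    by apply: (Hmono d _ n _ c (leq_maxl d n) (leq_maxr d n)).
  apply: (HN0 (maxn d n)) => //; lia.
exists (maxn M N0), N0; split; first lia; split.
- move=> n Hn' d c H; case: (ltnP d N0) => Hd'.
    apply: (Hmono d d M (maxn M N0) c (leqnn d) (leq_maxl M N0)).
    apply: (HM d Hd' n _ c H); lia.
  apply: (Hmono N0 d N0 (maxn M N0) c Hd' (leq_maxr M N0)).
  exact: HN0' H.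
- move=> n d Hn' Hd' c H.
  apply: (Hmono N0 N0 N0 (maxn M N0) c (leqnn N0) (leq_maxr M N0)).
  exact: HN0' H.
Qed.

End Chain.

Section Part1.
Variables (C : comPzRingType) (lam : C).
Hypothesis HQ : is_Q_algebra C.

Definition Ltop (I : (nat -> C) -> Prop) d (c : C) :=
  exists a, I a /\ a d = c /\ forall j, (d < j)%N -> a j = 0.

Definition Sid (I : (nat -> C) -> Prop) :=
  is_ideal_in (@sha_carrier C) (@sh_zero C) (@sh_add C) (@sh_opp C) (sh_mul lam) I.

Lemma delta_carrier j (c : C) : sha_carrier (delta j c).
Proof. exists j.+1 => n Hn; rewrite /delta; case: eqP => // E; lia. Qed.

Lemma Ltop_ideal I d : Sid I -> idealC (Ltop I d).
Proof.
move=> [IS I0 Iadd Iopp Imul]; split => //.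
- by exists (@sh_zero C).
- move=> x y [a [Ia [Ea Va]]] [b [Ib [Eb Vb]]]; exists (sh_add a b); split; first exact: Iadd.
  by split; [rewrite /sh_add Ea Eb | move=> j Hj; rewrite /sh_add Va ?Vb ?addr0].
- move=> x [a [Ia [Ea Va]]]; exists (sh_opp a); split; first exact: Iopp.
  by split; [rewrite /sh_opp Ea | move=> j Hj; rewrite /sh_opp Va ?oppr0].
- move=> r x _ [a [Ia [Ea Va]]]; exists (sh_mul lam (delta 0 r) a); split.
    by apply: Imul => //; exact: delta_carrier.
  have Hd0 : forall j, (0 < j)%N -> delta 0 r j = 0.
    by move=> j Hj; rewrite /delta; case: eqP => // E; lia.
  have [H1 H2] := sh_mul_top lam Hd0 Va.
  split; first by rewrite add0n in H2; rewrite H2 Ea /delta eqxx binn mul1r.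
  by move=> j Hj; apply: H1.
Qed.

Lemma Ltop_mono I d c : Sid I -> Ltop I d c -> Ltop I d.+1 c.
Proof.
move=> HI [a [Ia [Ea Va]]].
have [y Hy] := HQ d.
have [_ _ _ _ Imul] := Ltop_ideal d.+1 HI.
have -> : c = y * (d.+1%:R * c) by rewrite mulrA (mulrC y) Hy mul1r.
apply: Imul => //.
have [IS I0 Iadd Iopp Imul'] := HI.
exists (sh_mul lam (delta 1 1) a); split.
  by apply: Imul' => //; exact: delta_carrier.
have Hd1 : forall j, (1 < j)%N -> delta 1 (1 : C) j = 0.
  by move=> j Hj; rewrite /delta; case: eqP => // E; lia.
have [H1 H2] := sh_mul_top lam Hd1 Va.
rewrite add1n in H1 H2; split; first by rewrite H2 binSn Ea /delta eqxx mul1r.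
by move=> j Hj; apply: H1.
Qed.

Lemma key_top I J : Sid I -> Sid J -> (forall a, I a -> J a) ->
  (forall d c, Ltop J d c -> Ltop I d c) -> forall a, J a -> I a.
Proof.
move=> [IS I0 Iadd Iopp Imul] [JS J0 Jadd Jopp Jmul] HIJ HL.
suff H : forall d f, J f -> (forall j, (d <= j)%N -> f j = 0) -> I f.
  by move=> a Ja; have [N HN] := JS a Ja; exact: H N a Ja HN.
elim => [|d IH] f Jf Vf.
  have -> : f = @sh_zero C by apply: functional_extensionality => j; apply: Vf.
  exact: I0.
have [g [Ig [Eg Vg]]] : Ltop I d (f d).
  apply: HL; exists f; split => //; split => // j Hj; apply: Vf; lia.
have Ih : I (sh_add f (sh_opp g)).
  apply: IH; first by apply: Jadd => //; apply: Jopp; apply: HIJ.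
  move=> j Hj; rewrite /sh_add /sh_opp.
  case: (ltnP d j) => Hdj; first by rewrite Vf ?Vg ?subrr //.
  have -> : j = d by lia.
  by rewrite Eg subrr.
have -> : f = sh_add (sh_add f (sh_opp g)) g.
  by apply: functional_extensionality => j; rewrite /sh_add /sh_opp subrK.
exact: Iadd.
Qed.

Lemma part1 : noetherian_ring C -> sha_noetherian lam.
Proof.
move=> HC Is Hid Hinc.
have Hn' : forall d n c, Ltop (Is n) d c -> Ltop (Is n.+1) d c.
  by move=> d n c [a [Ia R]]; exists a; split => //; apply: Hinc.
have [N [D [_ [H1 _]]]] := chain2 (L := fun d n => Ltop (Is n) d) HC
  (fun d n => Ltop_ideal d (Hid n)) (fun d n c H => Ltop_mono (Hid n) H) Hn'.
exists N => n Hn x Hx.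
have Hsub : forall k a, Is N a -> Is (N + k)%N a.
  by move=> k a Ha; elim: k => [|k IH]; [rewrite addn0 | rewrite addnS; apply: Hinc].
apply: (key_top (Hid N) (Hid n)) => //.
- by move=> a Ha; rewrite -(subnKC Hn); apply: Hsub.
- by move=> d c Hc; apply: (H1 n Hn).
Qed.

End Part1.



Section Part2a.
Variable C : comPzRingType.

Lemma inner0 (a b : nat -> C) (m n P : nat) :
  \sum_(k < m.+1) (if (m + n - k == P)%N then
      a m * b n * ('C(m + n - k, n))%:R * ('C(n, k))%:R * (0 : C) ^+ k else 0)
  = if (m + n == P)%N then a m * b n * ('C(m + n, n))%:R else 0.
Proof.
rewrite (@sum_single C m.+1 (fun k => (if (m + n - k == P)%N then
      a m * b n * ('C(m + n - k, n))%:R * ('C(n, k))%:R * (0 : C) ^+ k else 0)) 0) //.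
  by rewrite subn0 bin0 expr0 !mulr1.
move=> k _ Hk; rewrite expr0n (negbTE Hk) mulr0; by case: ifP.
Qed.

Lemma formula0 (a b : nat -> C) P :
  sh_mul 0 a b P = \sum_(m < P.+1) a m * b (P - m)%N * ('C(P, P - m))%:R.
Proof.
rewrite /sh_mul; apply: eq_bigr => m _.
under eq_bigr => n _ do rewrite inner0.
have Hm := ltn_ord m.
have HPm : (P - m < P.+1)%N by lia.
rewrite (@sum_single C P.+1 (fun n => if (m + n == P)%N then a m * b n * ('C(m + n, n))%:R else 0) (P - m)) //.
  have -> : (m + (P - m) = P)%N by lia.
  by rewrite eqxx.
move=> n _ Hn; have -> : (m + n == P)%N = false by move/eqP: Hn; lia.
by [].
Qed.

Lemma sh_mul_bot (a b : nat -> C) d e : (forall j, (j < d)%N -> a j = 0) ->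
  (forall j, (j < e)%N -> b j = 0) ->
  (forall P, (P < d + e)%N -> sh_mul 0 a b P = 0) /\
  sh_mul 0 a b (d + e) = a d * b e * ('C(d + e, e))%:R.
Proof.
move=> Ha Hb; split.
  move=> P HP; rewrite formula0; apply: big1 => m _.
  case: (ltnP m d) => Hm; first by rewrite Ha ?mul0r.
  by move: (ltn_ord m) => Hm2; rewrite Hb ?mulr0 ?mul0r //; lia.
rewrite formula0.
have Hd : (d < (d + e).+1)%N by lia.
rewrite (@sum_single C _ (fun m => a m * b (d + e - m)%N * ('C(d + e, d + e - m))%:R) d Hd).
  by rewrite addKn.
move=> m Hm2 Hm; case: (ltnP m d) => Hm'; first by rewrite Ha ?mul0r.
by move/eqP: Hm => Hm; rewrite Hb ?mulr0 ?mul0r //; lia.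
Qed.

Lemma delta_mul t (c : C) g P : sh_mul 0 (delta t c) g P =
  if (t <= P)%N then c * g (P - t)%N * ('C(P, P - t))%:R else 0.
Proof.
rewrite formula0; case: ifP => Ht.
  have Ht' : (t < P.+1)%N by lia.
  rewrite (@sum_single C _ (fun m => delta t c m * g (P - m)%N * ('C(P, P - m))%:R) t Ht').
    by rewrite /delta eqxx.
  by move=> m _ Hm; rewrite /delta (negbTE Hm) !mul0r.
apply: big1 => m _; rewrite /delta; case: eqP => [E|_]; last by rewrite !mul0r.
by have := ltn_ord m; lia.
Qed.

End Part2a.

Section Part2b.
Variable C : comPzRingType.
Hypothesis HQ : is_Q_algebra C.

Definition Hid (I : (nat -> C) -> Prop) :=
  is_ideal_in (fun _ => True) (@sh_zero C) (@sh_add C) (@sh_opp C) (sh_mul 0) I.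

Definition Lbot (I : (nat -> C) -> Prop) d (c : C) :=
  exists a, I a /\ a d = c /\ forall j, (j < d)%N -> a j = 0.

Lemma Lbot_ideal I d : Hid I -> idealC (Lbot I d).
Proof.
move=> [IS I0 Iadd Iopp Imul]; split => //.
- by exists (@sh_zero C).
- move=> x y [a [Ia [Ea Va]]] [b [Ib [Eb Vb]]]; exists (sh_add a b); split; first exact: Iadd.
  by split; [rewrite /sh_add Ea Eb | move=> j Hj; rewrite /sh_add Va ?Vb ?addr0].
- move=> x [a [Ia [Ea Va]]]; exists (sh_opp a); split; first exact: Iopp.
  by split; [rewrite /sh_opp Ea | move=> j Hj; rewrite /sh_opp Va ?oppr0].
- move=> r x _ [a [Ia [Ea Va]]]; exists (sh_mul 0 (delta 0 r) a); split.
    exact: Imul.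
  have Hd0 : forall j, (j < 0)%N -> delta 0 r j = 0 by [].
  have [H1 H2] := sh_mul_bot Hd0 Va.
  rewrite add0n in H1 H2.
  split; first by rewrite H2 Ea /delta eqxx binn mulr1.
  by move=> j Hj; apply: H1.
Qed.

Lemma inv_nat (k : nat) : (0 < k)%N -> exists y : C, k%:R * y = 1.
Proof. by move=> Hk; have [y Hy] := HQ k.-1; exists y; rewrite prednK in Hy. Qed.

Lemma Lbot_mono I d c : Hid I -> Lbot I d c -> Lbot I d.+1 c.
Proof.
move=> HI [a [Ia [Ea Va]]].
have [y Hy] := HQ d.
have [_ _ _ _ Imul] := Lbot_ideal d.+1 HI.
have -> : c = y * (d.+1%:R * c) by rewrite mulrA (mulrC y) Hy mul1r.
apply: Imul => //.
have [IS I0 Iadd Iopp Imul'] := HI.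
exists (sh_mul 0 (delta 1 1) a); split; first exact: Imul'.
have Hd1 : forall j, (j < 1)%N -> delta 1 (1 : C) j = 0.
  by move=> j Hj; rewrite /delta; case: eqP => // E; lia.
have [H1 H2] := sh_mul_bot Hd1 Va.
rewrite add1n in H1 H2; split; first by rewrite H2 binSn Ea /delta eqxx mul1r mulrC.
by move=> j Hj; apply: H1.
Qed.

Definition span (cs : seq C) (c : C) :=
  exists w : nat -> C, c = \sum_(i < size cs) w i * nth 0 cs i.

Lemma span_ideal cs : idealC (span cs).
Proof.
split => //.
- by exists (fun _ => 0); rewrite big1 // => i _; rewrite mul0r.
- move=> x y [u ->] [v ->]; exists (fun i => u i + v i).
  by rewrite -big_split; apply: eq_bigr => i _; rewrite mulrDl.
- move=> x [u ->]; exists (fun i => - u i).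
  by rewrite -sumrN; apply: eq_bigr => i _; rewrite mulNr.
- move=> r x _ [u ->]; exists (fun i => r * u i).
  by rewrite mulr_sumr; apply: eq_bigr => i _; rewrite mulrA.
Qed.

Lemma span_rcons cs x c : span cs c -> span (rcons cs x) c.
Proof.
move=> [u ->]; exists (fun i => if (i < size cs)%N then u i else 0).
rewrite size_rcons big_ord_recr /= ltnn mul0r addr0.
apply: eq_bigr => i _; by rewrite ltn_ord nth_rcons ltn_ord.
Qed.

Lemma span_last cs x : span (rcons cs x) x.
Proof.
exists (fun i => if i == size cs then 1 else 0).
rewrite size_rcons big_ord_recr /= eqxx mul1r nth_rcons ltnn eqxx big1 ?add0r //.
move=> i _; have := ltn_ord i; case: eqP => [E|_ _]; last by rewrite mul0r.
by rewrite E ltnn.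
Qed.

Lemma fg J : noetherian_ring C -> idealC J -> exists cs : seq C,
  (forall i, (i < size cs)%N -> J (nth 0 cs i)) /\ forall c, J c -> span cs c.
Proof.
move=> HC HJ; apply: NNPP => Hno.
have Hnext : forall cs, (forall i, (i < size cs)%N -> J (nth 0 cs i)) ->
    exists c, J c /\ ~ span cs c.
  move=> cs Hcs; apply: NNPP => H; apply: Hno; exists cs; split => // c Jc.
  by apply: NNPP => Hs; apply: H; exists c.
pose next cs := epsilon (inhabits (0 : C)) (fun c => J c /\ ~ span cs c).
pose s := fix s (k : nat) : seq C := if k is k'.+1 then rcons (s k') (next (s k')) else [::].
have Hall : forall k i, (i < size (s k))%N -> J (nth 0 (s k) i).
  elim => [|k IH] i //=; rewrite size_rcons nth_rcons => Hi.
  case: ifP => Hik; first exact: IH.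
  have -> : i == size (s k) by lia.
  by have [] := epsilon_spec (inhabits (0 : C)) (fun c => J c /\ ~ span (s k) c) (Hnext _ (IH)).
have [N HN] := HC (fun k => span (s k)) (fun k => span_ideal (s k))
  (fun k c H => span_rcons (next (s k)) H).
have := HN N.+1 (leqnSn N) (next (s N)) (span_last (s N) (next (s N))).
by have [] := epsilon_spec (inhabits (0 : C)) (fun c => J c /\ ~ span (s N) c) (Hnext _ (Hall N)).
Qed.

Lemma ideal_sum I K (F : nat -> nat -> C) : Hid I ->
  (forall i, (i < K)%N -> I (F i)) -> I (fun P => \sum_(i < K) F i P).
Proof.
move=> [IS I0 Iadd Iopp Imul]; elim: K => [|K IH] HF.
  have -> : (fun P => \sum_(i < 0) F i P) = @sh_zero C.
    by apply: functional_extensionality => P; rewrite big_ord0.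
  exact: I0.
have -> : (fun P => \sum_(i < K.+1) F i P) = sh_add (fun P => \sum_(i < K) F i P) (F K).
  by apply: functional_extensionality => P; rewrite big_ord_recr.
apply: Iadd; first by apply: IH => i Hi; apply: HF; lia.
exact: HF.
Qed.

End Part2b.



Section Part2c.
Variable C : comPzRingType.
Hypothesis HQ : is_Q_algebra C.

Lemma approx (I J : (nat -> C) -> Prop) D : Hid I -> Hid J -> (forall a, I a -> J a) ->
  noetherian_ring C ->
  (forall d c, Lbot J d c -> Lbot I d c) ->
  (forall d, (D <= d)%N -> forall c, Lbot J d c -> Lbot I D c) ->
  forall f, J f -> I f.
Proof.
move=> HI HJ HIJ HC H1 H2.
have [IS I0 Iadd Iopp Imul] := HI; have [JS J0 Jadd Jopp Jmul] := HJ.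
have stepB : forall f, J f -> (forall j, (j < D)%N -> f j = 0) -> I f.
  have [cs [Hcs Hspan]] := fg HC (Lbot_ideal D HI).
  pose K := size cs.
  pose g i := epsilon (inhabits (@sh_zero C))
    (fun a => I a /\ a D = nth 0 cs i /\ forall j, (j < D)%N -> a j = 0).
  have Hg : forall i, (i < K)%N ->
      I (g i) /\ g i D = nth 0 cs i /\ forall j, (j < D)%N -> g i j = 0.
    move=> i Hi; exact: (epsilon_spec _ _ (Hcs i Hi)).
  move=> f Jf Vf.
  pose spec (r : nat -> C) t (w : nat -> C) :=
    r (D + t)%N = \sum_(i < K) sh_mul 0 (delta t (w i)) (g i) (D + t)%N.
  pose W r t := epsilon (inhabits (fun _ : nat => (0 : C))) (spec r t).
  pose incr r t := fun P => \sum_(i < K) sh_mul 0 (delta t (W r t i)) (g i) P.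
  pose R := fix R (t : nat) : nat -> C :=
    if t is t'.+1 then sh_add (R t') (sh_opp (incr (R t') t')) else f.
  have Hincr : forall r t, I (incr r t).
    move=> r t; rewrite /incr; apply: (@ideal_sum C I K (fun i P => sh_mul 0 (delta t (W r t i)) (g i) P)) => // i Hi; apply: Imul => //; exact: (Hg i Hi).1.
  have HRJ : forall t, J (R t).
    elim => [|t IH] //=; apply: Jadd => //; apply: Jopp; apply: HIJ; exact: Hincr.
  have Hex : forall r t, J r -> (forall j, (j < D + t)%N -> r j = 0) -> exists w, spec r t w.
    move=> r t Jr Vr.
    have HL : Lbot J (D + t) (r (D + t)%N) by exists r.
    have [u Hu] := Hspan _ (H2 _ (leq_addr t D) _ HL).
    have Hpos : (0 < 'C(D + t, D))%N by rewrite bin_gt0 leq_addr.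
    have [y Hy] := inv_nat HQ Hpos.
    exists (fun i => y * u i); rewrite /spec Hu.
    apply: eq_bigr => i _; rewrite delta_mul leq_addl.
    have -> : (D + t - t = D)%N by lia.
    rewrite (Hg i (ltn_ord i)).2.1.
    transitivity (u i * nth 0 cs i * ('C(D + t, D)%:R * y)); first by rewrite Hy mulr1.
    ring.
  have Hord : forall t j, (j < D + t)%N -> R t j = 0.
    elim => [|t IH] j Hj /=; first by apply: Vf; lia.
    rewrite /sh_add /sh_opp.
    case: (ltnP j (D + t)) => Hjt.
      rewrite IH // sub0r /incr big1 ?oppr0 // => i _.
      rewrite delta_mul; case: ifP => // Htj.
      by rewrite (Hg i (ltn_ord i)).2.2 ?mulr0 ?mul0r //; lia.
    have -> : j = (D + t)%N by lia.
    have := epsilon_spec (inhabits (fun _ : nat => (0 : C))) (spec (R t) t) (Hex _ _ (HRJ t) IH).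
    rewrite /spec => E.
    by apply/eqP; rewrite subr_eq0; apply/eqP; exact: E.
  pose h i := fun j => W (R j) j i.
  have Htel : forall P T, \sum_(m < T) incr (R m) m P = f P - R T P.
    move=> P; elim => [|T IH]; first by rewrite big_ord0 /= subrr.
    rewrite big_ord_recr IH /= /sh_add /sh_opp; ring.
  have Hf : f = (fun P => \sum_(i < K) sh_mul 0 (h i) (g i) P).
    apply: functional_extensionality => P.
    have := Htel P P.+1; rewrite (Hord P.+1 P) ?subr0; last lia.
    move <-.
    under [RHS]eq_bigr => i _ do rewrite formula0.
    rewrite [RHS]exchange_big /=.
    apply: eq_bigr => m _; apply: eq_bigr => i _.
    rewrite delta_mul.
    have -> : (m <= P)%N by have := ltn_ord m.
    by [].
  rewrite Hf; apply: (@ideal_sum C I K (fun i P => sh_mul 0 (h i) (g i) P)) => // i Hi; apply: Imul => //; exact: (Hg i Hi).1.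
have stepC : forall k, (k <= D)%N -> forall f, J f ->
    (forall j, (j < D - k)%N -> f j = 0) -> I f.
  elim => [|k IH] Hk f Jf Vf.
    by apply: stepB => // j Hj; apply: Vf; rewrite subn0.
  have HL : Lbot J (D - k.+1) (f (D - k.+1)%N).
    by exists f; split => //; split => // j Hj; apply: Vf.
  have [g [Ig [Eg Vg]]] := H1 _ _ HL.
  have Ih : I (sh_add f (sh_opp g)).
    apply: IH; first lia.
      by apply: Jadd => //; apply: Jopp; exact: HIJ.
    move=> j Hj; rewrite /sh_add /sh_opp.
    case: (ltnP j (D - k.+1)) => Hj'; first by rewrite Vf ?Vg ?subrr.
    have -> : j = (D - k.+1)%N by lia.
    by rewrite Eg subrr.
  have -> : f = sh_add (sh_add f (sh_opp g)) g.
    by apply: functional_extensionality => j; rewrite /sh_add /sh_opp subrK.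
  exact: Iadd.
move=> f Jf; apply: (stepC D (leqnn D)) => // j; by rewrite subnn.
Qed.

Lemma part2 : noetherian_ring C -> sha_hat_noetherian (0 : C).
Proof.
move=> HC Is Hids Hinc.
have Hn' : forall d n c, Lbot (Is n) d c -> Lbot (Is n.+1) d c.
  by move=> d n c [a [Ia R]]; exists a; split => //; apply: Hinc.
have [N [D [_ [H1 H2]]]] := chain2 (L := fun d n => Lbot (Is n) d) HC
  (fun d n => Lbot_ideal d (Hids n)) (fun d n c H => Lbot_mono HQ (Hids n) H) Hn'.
exists N => n Hn x Hx.
have Hsub : forall k a, Is N a -> Is (N + k)%N a.
  by move=> k a Ha; elim: k => [|k IH]; [rewrite addn0 | rewrite addnS; apply: Hinc].
apply: (approx (Hids N) (Hids n) _ HC (H1 n Hn) (fun d Hd => H2 n d Hn Hd)) => //.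
by move=> a Ha; rewrite -(subnKC Hn); apply: Hsub.
Qed.

End Part2c.

Unset Implicit Arguments.

Theorem theorem3p1 (C : comPzRingType) :
  [/\ (noetherian_ring C -> is_Q_algebra C -> forall lam : C, sha_noetherian lam),
      (noetherian_ring C -> is_Q_algebra C -> sha_hat_noetherian (0 : C)),
      (forall lam : C, is_Q_algebra C ->
         (forall x : C, lam * x = 0 -> x = 0) ->
         (exists2 x : C, x != 0 & forall n : nat, exists y : C, x = lam ^+ n * y) ->
         ~ sha_hat_noetherian lam) &
      (~ is_Q_algebra C -> forall lam : C,
         ~ sha_noetherian lam /\ ~ sha_hat_noetherian lam)].
Proof.
split.
- by move=> HC HQ lam; apply: part1.
- by move=> HC HQ; apply: part2.
- by move=> lam _ _ Hx; apply: part3.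
- exact: part4.
Qed.
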